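(* Let $\mathcal{A}$ be a finite alphabet and $\mathbf{p}$ an irreducible pair on $\mathcal{A}$. If $\mathbf{q}=(q_0,q_1)$ is a pair (on some alphabet) such that the permutation $q_1\circ q_0^{-1}$ lies in the non-labeled extended Rauzy class of $\mathbf{p}$, then $\mathrm{ARF}(\mathbf{q})=\mathrm{ARF}(\mathbf{p})$.
   Context: Let $n=\#\mathcal{A}$. A pair is $\mathbf{p}=(p_0,p_1)$ with $p_0,p_1:\mathcal{A}\to\{1,\dots,n\}$ bijections. Irreducible: $p_0^{-1}\{1,\dots,k\}\ne p_1^{-1}\{1,\dots,k\}$ for $1\le k<n$. Rauzy move of type $\varepsilon$: $\varepsilon\mathbf{p}=(p'_0,p'_1)$, $p'_\varepsilon=p_\varepsilon$, and for $z=p_\varepsilon^{-1}(n)$, $p'_{1-\varepsilon}(b)=p_{1-\varepsilon}(b)$ if $p_{1-\varepsilon}(b)\le p_{1-\varepsilon}(z)$, $=p_{1-\varepsilon}(b)+1$ if $p_{1-\varepsilon}(z)<p_{1-\varepsilon}(b)<n$, $=p_{1-\varepsilon}(z)+1$ if $p_{1-\varepsilon}(b)=n$. Left Rauzy move of type $\varepsilon$: $\tilde\varepsilon\mathbf{p}=(p'_0,p'_1)$, $p'_\varepsilon=p_\varepsilon$, and for $a=p_\varepsilon^{-1}(1)$, $p'_{1-\varepsilon}(b)=p_{1-\varepsilon}(a)-1$ if $p_{1-\varepsilon}(b)=1$, $=p_{1-\varepsilon}(b)-1$ if $1<p_{1-\varepsilon}(b)<p_{1-\varepsilon}(a)$,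 unchanged otherwise. The labeled extended Rauzy class of $\mathbf{p}$ is the set of pairs reachable from $\mathbf{p}$ by Rauzy and left Rauzy moves of both types; the non-labeled extended Rauzy class is its image under $(p_0,p_1)\mapsto p_1\circ p_0^{-1}\in\mathfrak{S}_n$. Quadratic form: $\mathcal{Q}_{\mathbf{p}}(v)=\sum_{a}v_a^2+\sum_{\{a,b\}}L_{\mathbf{p}}(a,b)v_av_b \pmod 2$ for $v\in\mathbb{Z}_2^{\mathcal{A}}$, the second sum over unordered pairs of distinct letters, with $L_{\mathbf{p}}(a,b)=1$ if $(p_0(a)-p_0(b))(p_1(a)-p_1(b))<0$ and $0$ otherwise. $\mathrm{ARF}(\mathbf{p})=\#\{v\in\mathbb{Z}_2^{\mathcal{A}}:\mathcal{Q}_{\mathbf{p}}(v)=1\}$. *)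

(* Defs.v *)
From mathcomp Require Import all_boot all_order.
Set Implicit Arguments. Unset Strict Implicit. Unset Printing Implicit Defensive.

(* A pair on the alphabet A: two functions A -> nat, the positions 1..n. *)
Definition pairT (A : finType) := ((A -> nat) * (A -> nat))%type.

Definition is_bij_pos (A : finType) (f : A -> nat) : Prop :=
  injective f /\ forall a, 1 <= f a <= #|A|.

Definition is_pair (A : finType) (p : pairT A) : Prop :=
  is_bij_pos p.1 /\ is_bij_pos p.2.

Definition irreducible (A : finType) (p : pairT A) : Prop :=
  forall k, 1 <= k < #|A| ->
    [set a | p.1 a <= k] != [set a | p.2 a <= k].

Definition comp_of (A : finType) (p : pairT A) (eps : bool) : A -> nat :=
  if eps then p.2 else p.1.

Definition mk_pair (A : finType) (eps : bool) (pe po : A -> nat) : pairT A :=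
  if eps then (po, pe) else (pe, po).

(* Rauzy move of type eps (eps = false is type 0, eps = true is type 1) *)
Definition rauzy (A : finType) (eps : bool) (p : pairT A) : pairT A :=
  let n := #|A| in
  let pe := comp_of p eps in
  let po := comp_of p (~~ eps) in
  match [pick z | pe z == n] with
  | None => p
  | Some z =>
    mk_pair eps pe (fun b =>
      if po b <= po z then po b
      else if po b < n then (po b).+1
      else (po z).+1)
  end.

Definition left_rauzy (A : finType) (eps : bool) (p : pairT A) : pairT A :=
  let pe := comp_of p eps in
  let po := comp_of p (~~ eps) in
  match [pick a | pe a == 1] with
  | None => p
  | Some a =>
    mk_pair eps pe (fun b =>
      if (po b == 1) && (1 < po a) then (po a).-1
      else if (1 < po b) && (po b < po a) then (po b).-1
      else po b)
  end.

Inductive ext_reach (A : finType) (p : pairT A) : pairT A -> Prop :=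
  | er_refl : ext_reach p p
  | er_rauzy eps q : ext_reach p q -> ext_reach p (rauzy eps q)
  | er_left eps q : ext_reach p q -> ext_reach p (left_rauzy eps q).

Definition perm_of (A : finType) (p : pairT A) (k : nat) : nat :=
  match [pick a | p.1 a == k] with
  | Some a => p.2 a
  | None => 0
  end.

Definition in_nonlabeled_class (A B : finType) (p : pairT A) (q : pairT B) : Prop :=
  exists p', ext_reach p p' /\ #|B| = #|A| /\
    forall k, 1 <= k <= #|A| -> perm_of q k = perm_of p' k.

Definition Lp (A : finType) (p : pairT A) (a b : A) : bool :=
  ((p.1 a < p.1 b) && (p.2 b < p.2 a)) || ((p.1 b < p.1 a) && (p.2 a < p.2 b)).

(* Q_p(v) mod 2, v in Z_2^A represented as a boolean vector; unordered pairs
   {a,b} are enumerated once via enum_rank a < enum_rank b *)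
Definition Qp (A : finType) (p : pairT A) (v : {ffun A -> bool}) : nat :=
  ((\sum_a (v a : nat) * (v a : nat)) +
   \sum_a \sum_(b | enum_rank a < enum_rank b)
        (Lp p a b : nat) * (v a : nat) * (v b : nat)) %% 2.

Definition ARF (A : finType) (p : pairT A) : nat :=
  #|[set v : {ffun A -> bool} | Qp p v == 1]|.

(* Main.v *)
Require Import Defs.
From mathcomp Require Import all_boot all_order.
From mathcomp Require Import zify.
Set Implicit Arguments. Unset Strict Implicit. Unset Printing Implicit Defensive.

Notation "\xor_ ( i | P ) F" := (\big[addb/false]_(i | P) F)
  (at level 41, F at level 41, i at level 50).
Notation "\xor_ i F" := (\big[addb/false]_i F)
  (at level 41, F at level 41, i at level 0).

Definition Ip (A : finType) (p : pairT A) (a b : A) : bool :=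
  (p.1 a < p.1 b) && (p.2 b < p.2 a).

Definition Qg (A : finType) (M : A -> A -> bool) (v : {ffun A -> bool}) : bool :=
  (\xor_a v a) (+) \xor_a \xor_b (M a b && v a && v b).

Lemma odd_big (I : finType) (P : pred I) (F : I -> nat) :
  odd (\sum_(i | P i) F i) = \big[addb/false]_(i | P i) odd (F i).
Proof. by apply: (big_morph odd oddD). Qed.

Lemma conv_sym (A : finType) (M : A -> A -> bool) (v : {ffun A -> bool}) :
  (forall a, M a a = false) ->
  \xor_a \big[addb/false]_(b | enum_rank a < enum_rank b)
      ((M a b (+) M b a) && v a && v b)
  = \xor_a \xor_b (M a b && v a && v b).
Proof.
move=> Mirr.
have E1 : \xor_a \xor_b (M a b && v a && v b) =
  \xor_a \xor_b ((if enum_rank a < enum_rank b then M a b && v a && v b else false)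
     (+) (if enum_rank b < enum_rank a then M a b && v a && v b else false)).
  apply: eq_bigr => a _; apply: eq_bigr => b _.
  case: (eqVneq a b) => [->|nab]; first by rewrite Mirr ltnn.
  have : enum_rank a != enum_rank b by apply: contra nab => /eqP/enum_rank_inj ->.
  case: (ltngtP (enum_rank a) (enum_rank b)) => H; rewrite ?addbF ?addFb //.
  by have := val_inj H => ->; rewrite eqxx.
rewrite E1.
have E2 : forall a, \xor_b ((if enum_rank a < enum_rank b then M a b && v a && v b else false)
     (+) (if enum_rank b < enum_rank a then M a b && v a && v b else false)) =
   (\xor_b (if enum_rank a < enum_rank b then M a b && v a && v b else false))
     (+) (\xor_b (if enum_rank b < enum_rank a then M a b && v a && v b else false)).
  by move=> a; rewrite big_split.
rewrite (eq_bigr _ (fun a _ => E2 a)) big_split /=.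
rewrite [X in _ = _ (+) X]exchange_big /=.
rewrite -big_split /=; apply: eq_bigr => a _.
rewrite big_mkcond -big_split /=; apply: eq_bigr => b _.
by case: ifP => _ //; case: (M a b); case: (M b a); case: (v a); case: (v b).
Qed.

Lemma Qp_Qg (A : finType) (p : pairT A) v : (Qp p v == 1) = Qg (Ip p) v.
Proof.
rewrite /Qp modn2 oddD !odd_big.
have -> : forall b : bool, (b == 1 :> nat) = b by case.
rewrite /Qg; congr addb.
  by apply: eq_bigr => a _; rewrite oddM andbb oddb.
rewrite -conv_sym; last by move=> a; rewrite /Ip ltnn.
apply: eq_bigr => a _; rewrite odd_big; apply: eq_bigr => b _.
rewrite !oddM !oddb /Lp /Ip.
by case: (ltngtP (p.1 a) (p.1 b)); case: (ltngtP (p.2 a) (p.2 b)).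
Qed.

Definition Tz (A : finType) (z w : A) (v : {ffun A -> bool}) : {ffun A -> bool} :=
  [ffun x => if x == z then v z (+) v w else v x].

Lemma split2 (A : finType) (z w : A) (F : A -> bool) : z != w ->
  \xor_a F a = F w (+) F z (+) \big[addb/false]_(a | (a != w) && (a != z)) F a.
Proof.
move=> nzw; rewrite (bigD1 w) //= (bigD1 z) /=; last by rewrite nzw.
by rewrite addbA.
Qed.

Lemma Qg_move (A : finType) (M M' : A -> A -> bool) (z w : A) v :
  z != w ->
  (forall a, M a a = false) -> (forall a, M' a a = false) ->
  (forall a b, a != w -> b != w -> M' a b = M a b) ->
  (forall b, b != w -> b != z ->
     M' w b (+) M' b w = M w b (+) M b w (+) M z b (+) M b z) ->
  M' w z (+) M' z w = true -> M w z (+) M z w = true ->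
  Qg M' v = Qg M (Tz z w v).
Proof.
move=> nzw Mi M'i G1 G2 G3 G4.
have nwz : w != z by rewrite eq_sym.
set u := Tz z w v.
have uz : u z = v z (+) v w by rewrite /u /Tz ffunE eqxx.
have uo : forall x, x != z -> u x = v x by move=> x nx; rewrite /u /Tz ffunE (negbTE nx).
pose g a b := (M' a b && v a && v b) (+) (M a b && u a && u b).
have Hg0 : forall a b, a != w -> a != z -> b != w -> b != z -> g a b = false.
  move=> a b aw az bw bz; rewrite /g G1 // !uo //.
  by case: (M a b && v a && v b).
have Hh : forall a, a != w -> a != z -> \xor_b g a b = g a w (+) g a z.
  move=> a aw az; rewrite (split2 _ nzw) big1 ?addbF // => b /andP[bw bz].
  exact: Hg0.
have HD : (\xor_a \xor_b (M' a b && v a && v b)) (+) (\xor_a \xor_b (M a b && u a && u b))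
    = v w.
  rewrite -big_split /=.
  rewrite (eq_bigr (fun a => \xor_b g a b)); last by move=> a _; rewrite -big_split.
  rewrite (split2 _ nzw).
  rewrite [X in _ (+) X](eq_bigr (fun a => g a w (+) g a z)); last first.
    by move=> a /andP[]; exact: Hh.
  rewrite (split2 (g w) nzw) (split2 (g z) nzw).
  set Xw := \big[addb/false]_(a | _) g w a.
  set Xz := \big[addb/false]_(a | _) g z a.
  have HY : \big[addb/false]_(a | (a != w) && (a != z)) (g a w (+) g a z) = Xw (+) Xz.
    rewrite /Xw /Xz -big_split /=.
    apply: eq_bigr => b /andP[bw bz].
    have E := G2 b bw bz.
    rewrite /g uz !uo // [M' b z]G1 // [M' z b]G1 //.
    move: E; case: (M' w b); case: (M' b w); case: (M w b); case: (M b w);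
      case: (M z b); case: (M b z); case: (v w); case: (v z); case: (v b) => //.
  rewrite HY /g uz !uo // [M' z z]G1 // !Mi !M'i.
  move: G3 G4; move: (Xw) (Xz) => x y.
  case: (M' w z); case: (M' z w); case: (M w z); case: (M z w);
    case: (v w); case: (v z); case: x; case: y => //.
rewrite /Qg.
rewrite (split2 _ nzw) [in RHS](split2 _ nzw) uz uo //.
rewrite (eq_bigl (fun a => (a != w) && (a != z))) //.
have Hr : \big[addb/false]_(a | (a != w) && (a != z)) u a =
          \big[addb/false]_(a | (a != w) && (a != z)) v a.
  by apply: eq_bigr => a /andP[_ az]; rewrite uo.
rewrite Hr.
move: HD; set P := \xor_a \xor_b (M' a b && v a && v b).
set Q := \xor_a \xor_b (M a b && u a && u b).
move: (P) (Q) => x y.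
case: x; case: y; case: (v w); case: (v z); case: (\big[addb/false]_(a | _) v a) => //.
Qed.

Lemma ARF_Qg (A : finType) (p : pairT A) : ARF p = #|[set v | Qg (Ip p) v]|.
Proof. by rewrite /ARF; apply: eq_card => v; rewrite !inE Qp_Qg. Qed.

Lemma Tz_inv (A : finType) (z w : A) v : z != w -> Tz z w (Tz z w v) = v.
Proof.
move=> nzw; apply/ffunP => x; rewrite /Tz !ffunE.
case: (eqVneq x z) => [->|]; last by [].
by rewrite eqxx eq_sym (negbTE nzw) -addbA addbb addbF.
Qed.

Lemma ARF_move_gen (A : finType) (p p' : pairT A) (z w : A) : z != w ->
  (forall v, Qg (Ip p') v = Qg (Ip p) (Tz z w v)) -> ARF p' = ARF p.
Proof.
move=> nzw H; rewrite !ARF_Qg.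
have inj : injective (Tz z w) by apply: (can_inj (g := Tz z w)) => v; exact: Tz_inv.
rewrite -[RHS](card_imset _ inj); apply: eq_card => v.
rewrite inE H; apply/idP/imsetP => [Hv|[u]]; last by rewrite inE => Hu ->; rewrite Tz_inv.
by exists (Tz z w v); rewrite ?inE ?Tz_inv.
Qed.

Definition swapp (A : finType) (p : pairT A) : pairT A := (p.2, p.1).

Lemma Qg_tr (A : finType) (M : A -> A -> bool) v : Qg (fun a b => M b a) v = Qg M v.
Proof.
rewrite /Qg exchange_big /=; congr addb; apply: eq_bigr => a _; apply: eq_bigr => b _.
by rewrite -!andbA; congr andb; rewrite andbC.
Qed.

Lemma eq_Qg (A : finType) (M M' : A -> A -> bool) v :
  (forall a b, M a b = M' a b) -> Qg M v = Qg M' v.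
Proof.
by move=> H; rewrite /Qg; congr addb; apply: eq_bigr => a _; apply: eq_bigr => b _; rewrite H.
Qed.

Lemma ARF_swap (A : finType) (p : pairT A) : ARF (swapp p) = ARF p.
Proof.
rewrite !ARF_Qg; apply: eq_card => v; rewrite !inE -[in RHS]Qg_tr.
by apply: eq_Qg => a b; rewrite /Ip /= andbC.
Qed.

Lemma Qg_reindex (A B : finType) (M : A -> A -> bool) (s : B -> A) u :
  bijective s -> Qg M u = Qg (fun a b => M (s a) (s b)) [ffun b => u (s b)].
Proof.
move=> bij; rewrite /Qg (reindex s) /=; last exact: onW_bij.
congr addb; first by apply: eq_bigr => b _; rewrite ffunE.
rewrite (reindex s) /=; last exact: onW_bij.
apply: eq_bigr => b _; rewrite (reindex s) /=; last exact: onW_bij.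
by apply: eq_bigr => c _; rewrite !ffunE.
Qed.

Lemma ARF_transport (A B : finType) (p : pairT A) (q : pairT B) (s : B -> A) (s' : A -> B) :
  cancel s s' -> cancel s' s -> (forall b, q.1 b = p.1 (s b)) ->
  (forall b, q.2 b = p.2 (s b)) -> ARF q = ARF p.
Proof.
move=> ss' s's H1 H2.
have bij : bijective s by exists s'.
pose F (v : {ffun B -> bool}) : {ffun A -> bool} := [ffun a => v (s' a)].
pose G (u : {ffun A -> bool}) : {ffun B -> bool} := [ffun b => u (s b)].
have FG : cancel F G by move=> v; apply/ffunP => b; rewrite !ffunE ss'.
have GF : cancel G F by move=> u; apply/ffunP => a; rewrite !ffunE s's.
have HQ : forall v, Qg (Ip q) v = Qg (Ip p) (F v).
  move=> v; rewrite (Qg_reindex _ _ bij) -/(G (F v)) FG.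
  by apply: eq_Qg => a b; rewrite /Ip !H1 !H2.
rewrite !ARF_Qg -[RHS](card_imset _ (can_inj GF)).
apply: eq_card => v; rewrite inE; apply/idP/imsetP => [Hv|[u]].
  by exists (F v); rewrite ?inE -?HQ ?FG.
by rewrite inE => Hu ->; rewrite HQ GF.
Qed.

Lemma surj_pos (A : finType) (f : A -> nat) : is_bij_pos f ->
  forall k, 1 <= k <= #|A| -> exists a, f a = k.
Proof.
move=> [inj rng] k Hk.
have lt : forall a, (f a).-1 < #|A| by move=> a; have := rng a; lia.
pose g a := Ordinal (lt a).
have ginj : injective g.
  move=> a b /(congr1 val) /= E; apply: inj; have := rng a; have := rng b; lia.
have [h gh hg] : bijective g by apply: inj_card_bij; rewrite // card_ord.
have Hk' : k.-1 < #|A|.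
  by case/andP: Hk => H1 H2; rewrite prednK.
exists (h (Ordinal Hk')).
have E : (f (h (Ordinal Hk'))).-1 = k.-1 by exact: (congr1 val (hg (Ordinal Hk'))).
move: E; have := rng (h (Ordinal Hk')); move: Hk; lia.
Qed.

Ltac crush1 := match goal with
 | |- context [if ?b then _ else _] => lazymatch b with
     | context [?m < ?n] => case: (ltnP m n) => ?
     | context [?m <= ?n] => case: (leqP m n) => ?
     | context [?m == ?n] => case: (eqVneq m n) => ?
     end
 | |- context [?m < ?n] => case: (ltnP m n) => ?
 | |- context [?m <= ?n] => case: (leqP m n) => ?
 | |- context [?m == ?n] => case: (eqVneq m n) => ?
 end.
Ltac crush := repeat (crush1; rewrite ?andTb ?andFb ?andbT ?andbF /=); try by [].

Lemma inj_neq (A : finType) (f : A -> nat) : injective f -> forall x y, x != y -> f x <> f y.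
Proof. by move=> inj x y nxy E; move: nxy; rewrite (inj _ _ E) eqxx. Qed.

Lemma ARF_ext (A : finType) (p q : pairT A) :
  (forall a, q.1 a = p.1 a) -> (forall a, q.2 a = p.2 a) -> ARF q = ARF p.
Proof. by move=> H1 H2; apply: (ARF_transport (s := id) (s' := id)). Qed.

Lemma rauzy0 (A : finType) (p : pairT A) :
  is_pair p -> is_pair (rauzy false p) /\ ARF (rauzy false p) = ARF p.
Proof.
move=> Hp; have [[inj1 r1] [inj2 r2]] := Hp.
rewrite /rauzy /=.
case: pickP => [z /eqP Hz | _]; last by split.
move: Hz; set n := #|A| => Hz.
have [w Hw] : exists w, p.2 w = n.
  by apply: (surj_pos (conj inj2 r2)); have := r1 z; lia.
set f := fun b => if p.2 b <= p.2 z then p.2 b else if p.2 b < n then (p.2 b).+1 else (p.2 z).+1.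
rewrite /mk_pair.
have ltw : forall x, x != w -> p.2 x < n.
  move=> x xw; have := inj_neq inj2 xw; have := r2 x; rewrite -/n Hw; lia.
have N1 := inj_neq inj1; have N2 := inj_neq inj2.
have R1 : forall x, 1 <= p.1 x /\ p.1 x <= n by move=> x; have := r1 x; lia.
have R2 : forall x, 1 <= p.2 x /\ p.2 x <= n by move=> x; have := r2 x; lia.
split.
  split; first by split.
  split.
    move=> x y E; apply: inj2; move: E; rewrite /= /f /=.
    have := R2 x; have := R2 y; have := R2 z; move=> [? ?] [? ?] [? ?].
    crush; lia.
  move=> x; rewrite /= -/n /f /=; have := R2 x; have := R2 z; move=> [? ?] [? ?].
  apply/andP; split; crush; lia.
case: (eqVneq z w) => [ezw|nzw].
  apply: ARF_ext => // x /=; rewrite /f; have := R2 x; rewrite ezw Hw; move=> [? ?].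
  by rewrite ifT.
apply: (ARF_move_gen nzw) => v; apply: Qg_move => //.
- by move=> a; rewrite /Ip /= ltnn.
- by move=> a; rewrite /Ip /= ltnn.
- move=> a b aw bw; rewrite /Ip /=; congr andb; rewrite /f.
  have := ltw a aw; have := ltw b bw; have := R2 a; have := R2 b; have := R2 z.
  move=> [? ?] [? ?] [? ?] ? ?.
  crush; lia.
- move=> b bw bz; rewrite /Ip /f /=.
  have := ltw b bw; have := ltw z nzw; have := R2 b; have := R2 z; have := R1 b; have := R1 w.
  have := N1 _ _ bw; have := N2 _ _ bz; have := N1 _ _ bz; have := N1 _ _ nzw.
  move=> ? ? ? ? [? ?] [? ?] [? ?] [? ?] ? ?.
  rewrite Hw Hz; crush; lia.
- rewrite /Ip /f /=.
  have := ltw z nzw; have := R2 z; have := R1 w; have := N1 _ _ nzw.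
  move=> ? [? ?] [? ?] ?.
  rewrite Hw Hz; crush; lia.
- rewrite /Ip /=.
  have := ltw z nzw; have := R2 z; have := R1 w; have := N1 _ _ nzw.
  move=> ? [? ?] [? ?] ?.
  rewrite Hw Hz; crush; lia.
Qed.

Lemma lrauzy0 (A : finType) (p : pairT A) :
  is_pair p -> is_pair (left_rauzy false p) /\ ARF (left_rauzy false p) = ARF p.
Proof.
move=> Hp; have [[inj1 r1] [inj2 r2]] := Hp.
rewrite /left_rauzy /=.
case: pickP => [z /eqP Hz | _]; last by split.
set n := #|A|.
have [w Hw] : exists w, p.2 w = 1.
  by apply: (surj_pos (conj inj2 r2)); have := r1 z; lia.
set f := fun b => if (p.2 b == 1) && (1 < p.2 z) then (p.2 z).-1
          else if (1 < p.2 b) && (p.2 b < p.2 z) then (p.2 b).-1 else p.2 b.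
rewrite /mk_pair.
have N1 := inj_neq inj1; have N2 := inj_neq inj2.
have R1 : forall x, 1 <= p.1 x /\ p.1 x <= n by move=> x; have := r1 x; lia.
have R2 : forall x, 1 <= p.2 x /\ p.2 x <= n by move=> x; have := r2 x; lia.
have gtw : forall x, x != w -> 1 < p.2 x.
  move=> x xw; have := N2 _ _ xw; have := R2 x; rewrite Hw; lia.
split.
  split; first by split.
  split.
    move=> x y E; apply: inj2; move: E; rewrite /= /f /=.
    have := R2 x; have := R2 y; have := R2 z; move=> [? ?] [? ?] [? ?].
    crush; lia.
  move=> x; rewrite /= -/n /f /=; have := R2 x; have := R2 z; move=> [? ?] [? ?].
  apply/andP; split; crush; lia.
case: (eqVneq z w) => [ezw|nzw].
  apply: ARF_ext => // x /=; rewrite /f; have := R2 x; rewrite ezw Hw; move=> [? ?].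
  crush; lia.
apply: (ARF_move_gen nzw) => v; apply: Qg_move => //.
- by move=> a; rewrite /Ip /= ltnn.
- by move=> a; rewrite /Ip /= ltnn.
- move=> a b aw bw; rewrite /Ip /=; congr andb; rewrite /f.
  have := gtw a aw; have := gtw b bw; have := R2 a; have := R2 b; have := R2 z.
  move=> [? ?] [? ?] [? ?] ? ?.
  crush; lia.
- move=> b bw bz; rewrite /Ip /f /=.
  have := gtw b bw; have := gtw z nzw; have := R2 b; have := R2 z; have := R1 b; have := R1 w.
  have := N1 _ _ bw; have := N2 _ _ bz; have := N1 _ _ bz; have := N1 _ _ nzw.
  move=> ? ? ? ? [? ?] [? ?] [? ?] [? ?] ? ?.
  rewrite Hw Hz; crush; lia.
- rewrite /Ip /f /=.
  have := gtw z nzw; have := R2 z; have := R1 w; have := N1 _ _ nzw.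
  move=> ? [? ?] [? ?] ?.
  rewrite Hw Hz; crush; lia.
- rewrite /Ip /=.
  have := gtw z nzw; have := R2 z; have := R1 w; have := N1 _ _ nzw.
  move=> ? [? ?] [? ?] ?.
  rewrite Hw Hz; crush; lia.
Qed.

Lemma rauzy1E (A : finType) (p : pairT A) : rauzy true p = swapp (rauzy false (swapp p)).
Proof. by rewrite /rauzy /swapp /=; case: [pick z | _] => [z|] //; case: p. Qed.

Lemma lrauzy1E (A : finType) (p : pairT A) :
  left_rauzy true p = swapp (left_rauzy false (swapp p)).
Proof. by rewrite /left_rauzy /swapp /=; case: [pick z | _] => [z|] //; case: p. Qed.

Lemma is_pair_swap (A : finType) (p : pairT A) : is_pair p -> is_pair (swapp p).
Proof. by case. Qed.

Lemma reach_inv (A : finType) (p q : pairT A) :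
  ext_reach p q -> is_pair p -> is_pair q /\ ARF q = ARF p.
Proof.
move=> H Hp; elim: H => [|eps q' _ [Hq E]|eps q' _ [Hq E]]; first by [].
  case: eps.
    have [H1 H2] := rauzy0 (is_pair_swap Hq).
    by rewrite rauzy1E ARF_swap H2 ARF_swap; split => //; apply: is_pair_swap.
  by have [H1 H2] := rauzy0 Hq; rewrite H2.
case: eps.
  have [H1 H2] := lrauzy0 (is_pair_swap Hq).
  by rewrite lrauzy1E ARF_swap H2 ARF_swap; split => //; apply: is_pair_swap.
by have [H1 H2] := lrauzy0 Hq; rewrite H2.
Qed.

Lemma perm_ofE (A : finType) (p : pairT A) a : injective p.1 -> perm_of p (p.1 a) = p.2 a.
Proof.
move=> inj; rewrite /perm_of; case: pickP => [a' /eqP E|H].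
  by rewrite (inj _ _ E).
by have := H a; rewrite eqxx.
Qed.

Unset Implicit Arguments.

Theorem corollary2p20 (A : finType) (p : pairT A) (B : finType) (q : pairT B) :
  is_pair p -> irreducible p -> is_pair q -> in_nonlabeled_class p q ->
  ARF q = ARF p.
Proof.
move=> Hp _ [[qi1 qr1] [qi2 qr2]] [p' [Hr [cBA Hperm]]].
have [[pi1 pr1] [pi2 pr2]] := (reach_inv Hr Hp).1.
rewrite -(reach_inv Hr Hp).2.
have [s Hs] : exists s : B -> A, forall b, p'.1 (s b) = q.1 b.
  apply: (@fin_all_exists B (fun _ => A) (fun b a => p'.1 a = q.1 b)) => b.
  apply: (surj_pos (conj pi1 pr1)).
  by rewrite -cBA.
have sinj : injective s by move=> x y E; apply: qi1; rewrite -!Hs E.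
have [s' ss' s's] : bijective s by apply: inj_card_bij; rewrite // cBA.
apply: (ARF_transport ss' s's) => b; first by rewrite Hs.
rewrite -(perm_ofE b qi1) Hperm; last by rewrite -cBA.
by rewrite -Hs perm_ofE.
Qed.
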